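(* Let $\mathcal X\subset\mathbb R^d$ be convex and compact and let $f:\mathcal X\to\mathcal X$ be any function. Consider the two-player game in which both players have strategy set $\mathcal X$ and $u_1(x,y)=-\|x-y\|_2^2$, $u_2(x,y)=-\|y-f(x)\|_2^2$. Let $\mu\in\Delta(\mathcal X\times\mathcal X)$ be an $\varepsilon$-approximate normal-form correlated equilibrium of this game, and write $\mathbb E_x$ for expectation over the $x$-marginal of $\mu$. Then for every convex function $Q:\mathcal X\to\mathbb R$ that is $1$-Lipschitz with respect to $\|\cdot\|_2$, $$\mathbb E_x\big[Q(x)-Q(f(x))\big]\le 2\sqrt{\varepsilon}.$$
   Context: $\Delta(S)$ denotes the set of finite-support probability distributions on $S$. For a game with strategy sets $\mathcal X_i$ and utilities $u_i$, an $\varepsilon$-approximate normal-form correlated equilibrium is a distribution $\mu$ over strategy profiles such that $\mathbb E_{x\sim\mu}[u_i(\phi_i(x_i),x_{-i})-u_i(x)]\le\varepsilon$ for every player $i$ and every (arbitrary) map $\phi_i:\mathcal X_i\to\mathcal X_i$. *)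

(* Defs.v *)
From Stdlib Require List.
From HB Require Import structures.
From mathcomp Require Import all_boot all_order all_algebra.
From mathcomp Require Import all_classical all_reals all_analysis.
Set Implicit Arguments. Unset Strict Implicit. Unset Printing Implicit Defensive.
Import Order.TTheory GRing.Theory Num.Theory.
Import numFieldTopology.Exports.
Local Open Scope ring_scope.
Local Open Scope classical_set_scope.

Definition sqnorm {R : realType} {d : nat} (v : 'rV[R]_d) : R :=
  \sum_(i < d) v ord0 i ^+ 2.
Definition norm2 {R : realType} {d : nat} (v : 'rV[R]_d) : R :=
  Num.sqrt (sqnorm v).

Definition convex_on {R : realType} {d : nat} (X : set 'rV[R]_d)
  (Q : 'rV[R]_d -> R) : Prop :=
  forall x y t, X x -> X y -> 0 <= t <= 1 ->
    Q (t *: x + (1 - t) *: y) <= t * Q x + (1 - t) * Q y.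

Definition lipschitz1_on {R : realType} {d : nat} (X : set 'rV[R]_d)
  (Q : 'rV[R]_d -> R) : Prop :=
  forall x y, X x -> X y -> `|Q x - Q y| <= norm2 (x - y).

(* A finite-support probability distribution on S, as a finite list of
   (atom, weight) pairs with nonnegative weights summing to 1. *)
Definition is_fdistr {R : realType} {S : Type} (mu : seq (S * R)) : Prop :=
  (forall p, List.In p mu -> 0 <= p.2) /\ \sum_(p <- mu) p.2 = 1.

Definition expect {R : realType} {S : Type} (mu : seq (S * R)) (g : S -> R) : R :=
  \sum_(p <- mu) p.2 * g p.1.

Definition supported_on {R : realType} {S : Type} (mu : seq (S * R)) (A : S -> Prop) :=
  forall p, List.In p mu -> A p.1.

Definition approx_nfce {R : realType} {T1 T2 : Type} (X1 : set T1) (X2 : set T2)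
  (u1 u2 : T1 -> T2 -> R) (eps : R) (mu : seq ((T1 * T2) * R)) : Prop :=
  is_fdistr mu /\ supported_on mu (fun xy => X1 xy.1 /\ X2 xy.2) /\
  (forall phi : T1 -> T1, (forall x, X1 x -> X1 (phi x)) ->
     expect mu (fun xy => u1 (phi xy.1) xy.2 - u1 xy.1 xy.2) <= eps) /\
  (forall phi : T2 -> T2, (forall y, X2 y -> X2 (phi y)) ->
     expect mu (fun xy => u2 xy.1 (phi xy.2) - u2 xy.1 xy.2) <= eps).

(* Main.v *)
Set Warnings "-notation-overridden,-ambiguous-paths,-notation-incompatible-prefix,-deprecated".
Require Import Defs.
From HB Require Import structures.
From mathcomp Require Import all_boot all_order all_algebra.
From mathcomp Require Import all_classical all_reals all_analysis.
From mathcomp Require Import ring lra.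
Import Order.TTheory GRing.Theory Num.Theory.
Import numFieldTopology.Exports.
Local Open Scope ring_scope.
Local Open Scope classical_set_scope.
Lemma convX (R : realType) (d : nat) (X : set 'rV[R]_d) t a b :
  convex_set X -> X a -> X b -> 0 <= t -> t <= 1 -> X (t *: a + (1 - t) *: b).
Proof.
move=> cX Xa Xb t0 t1.
have := cX a b (Itv01 t0 t1) (mem_set Xa) (mem_set Xb).
by rewrite inE.
Qed.
Lemma w0 (R : realType) (T : eqType) (l : seq (T * R)) :
  (forall p, p \in l -> 0 <= p.2) -> \sum_(p <- l) p.2 = 0 ->
  forall p, p \in l -> p.2 = 0.
Proof.
elim: l => // q l IH H0; rewrite big_cons => Hs p.
have a : 0 <= q.2 by apply: H0; rewrite in_cons eqxx.
have b : 0 <= \sum_(p <- l) p.2.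
  by rewrite big_seq; apply: sumr_ge0 => i il; apply: H0; rewrite in_cons il orbT.
rewrite in_cons => /orP [/eqP->|pl]; first by lra.
apply: IH => //; [by move=> i il; apply: H0; rewrite in_cons il orbT | lra].
Qed.

Lemma jensen (R : realType) (d : nat) (X : set 'rV[R]_d) (Q : 'rV[R]_d -> R)
  (l : seq (('rV[R]_d * 'rV[R]_d) * R)) :
  convex_set X -> convex_on X Q -> (forall p, p \in l -> X p.1.2 /\ 0 <= p.2) ->
  0 < \sum_(p <- l) p.2 ->
  X ((\sum_(p <- l) p.2)^-1 *: \sum_(p <- l) p.2 *: p.1.2) /\
  (\sum_(p <- l) p.2) * Q ((\sum_(p <- l) p.2)^-1 *: \sum_(p <- l) p.2 *: p.1.2)
    <= \sum_(p <- l) p.2 * Q p.1.2.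
Proof.
move=> cX cQ; elim: l => [|q l IH] H; first by rewrite big_nil ltxx.
have Hl : forall p, p \in l -> X p.1.2 /\ 0 <= p.2.
  by move=> p pl; apply: H; rewrite in_cons pl orbT.
have [Xv w0'] : X q.1.2 /\ 0 <= q.2 by apply: H; rewrite in_cons eqxx.
rewrite !big_cons.
set W := \sum_(p <- l) p.2; set S := \sum_(p <- l) p.2 *: p.1.2;
set SQ := \sum_(p <- l) p.2 * Q p.1.2.
have W0 : 0 <= W by rewrite /W big_seq; apply: sumr_ge0 => i /Hl [].
have [We|Wpos] := eqVneq W 0.
  have z := @w0 R _ l (fun p pl => (Hl p pl).2) We.
  rewrite We.
  have -> : S = 0 by rewrite /S big1_seq // => i /andP [_ /z ->]; rewrite scale0r.
  have -> : SQ = 0 by rewrite /SQ big1_seq // => i /andP [_ /z ->]; rewrite mul0r.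
  rewrite !addr0 => wpos.
  rewrite scalerA mulVf ?scale1r; last by rewrite gt_eqF.
  by split.
have Wp : 0 < W by rewrite lt_neqAle eq_sym Wpos W0.
move=> _.
have [Xc Qc] := IH Hl Wp.
set c := W^-1 *: S in Xc Qc.
have Sc : S = W *: c by rewrite /c scalerA mulfV ?scale1r // gt_eqF.
have T0 : 0 < q.2 + W by lra.
set t := q.2 / (q.2 + W).
have t0 : 0 <= t by rewrite /t divr_ge0 // ltW.
have t1 : t <= 1 by rewrite /t ler_pdivrMr // mul1r; lra.
have E : (q.2 + W)^-1 *: (q.2 *: q.1.2 + S) = t *: q.1.2 + (1 - t) *: c.
  rewrite Sc scalerDr !scalerA; congr (_ *: _ + _ *: _).
    by rewrite /t mulrC.
  rewrite /t; field; lra.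
rewrite E; split; first exact: convX.
have HQ := cQ _ _ t Xv Xc (introT andP (conj t0 t1)).
have e1 : (q.2 + W) * t = q.2 by rewrite /t mulrC divfK // gt_eqF.
have e2 : (q.2 + W) * (1 - t) = W by rewrite mulrBr mulr1 e1; ring.
have := ler_wpM2l (ltW T0) HQ.
clearbody t; move=> h; rewrite mulrDr !mulrA e1 e2 in h.
rewrite -/W -/SQ in Qc; lra.
Qed.
Lemma group_sum (R : realType) (T A : eqType) (key : A -> T) (L : seq A) (F : A -> R) :
  \sum_(p <- L) F p = \sum_(k <- undup (map key L)) \sum_(p <- L | key p == k) F p.
Proof.
rewrite (exchange_big_dep predT) //= big_seq_cond [RHS]big_seq_cond.
apply: eq_bigr => p /andP [pL _].
rewrite -big_filter (@eq_filter _ _ (pred1 (key p))); last by move=> k /=; rewrite eq_sym.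
rewrite filter_pred1_uniq ?undup_uniq ?big_seq1 // mem_undup map_f //.
Qed.

Lemma var_le (R : realType) (A : eqType) (L : seq A) (w n : A -> R) :
  (forall p, p \in L -> 0 <= w p) -> \sum_(p <- L) w p = 1 ->
  (\sum_(p <- L) w p * n p) ^+ 2 <= \sum_(p <- L) w p * n p ^+ 2.
Proof.
move=> w0 w1; have [m mE] : {m | m = \sum_(p <- L) w p * n p} by exists (\sum_(p <- L) w p * n p).
rewrite -mE.
have : 0 <= \sum_(p <- L) w p * (n p - m) ^+ 2.
  by rewrite big_seq; apply: sumr_ge0 => p pL; rewrite mulr_ge0 ?sqr_ge0 ?w0.
have -> : \sum_(p <- L) w p * (n p - m) ^+ 2 =
   \sum_(p <- L) w p * n p ^+ 2 - 2 * m * \sum_(p <- L) w p * n p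
   + m ^+ 2 * \sum_(p <- L) w p.
  rewrite !mulr_sumr -sumrB -big_split /=; apply: eq_bigr => p _; ring.
rewrite w1 -mE; lra.
Qed.

Lemma key_ident (R : realType) (d : nat) (l : seq (('rV[R]_d * 'rV[R]_d) * R)) (k c : 'rV[R]_d) :
  c = k \/ (\sum_(p <- l) p.2 != 0 /\ c = (\sum_(p <- l) p.2)^-1 *: \sum_(p <- l) p.2 *: p.1.2) ->
  \sum_(p <- l) p.2 * (sqnorm (k - p.1.2) - sqnorm (c - p.1.2)) =
  \sum_(p <- l) p.2 * sqnorm (k - c).
Proof.
move=> Hc; rewrite /sqnorm.
under eq_bigr => p _ do rewrite -sumrB mulr_sumr.
under [RHS]eq_bigr => p _ do rewrite mulr_sumr.
rewrite exchange_big [RHS]exchange_big /=; apply: eq_bigr => i _.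
under eq_bigr => p _ do rewrite !mxE.
under [RHS]eq_bigr => p _ do rewrite !mxE.
transitivity (\sum_(p <- l) (p.2 * (k ord0 i - c ord0 i) ^+ 2 +
   (2 * (k ord0 i - c ord0 i)) * (p.2 * c ord0 i - p.2 * p.1.2 ord0 i))).
  by apply: eq_bigr => p _; ring.
rewrite big_split /= -mulr_sumr.
suff -> : (2 * (k ord0 i - c ord0 i)) * \sum_(p <- l) (p.2 * c ord0 i - p.2 * p.1.2 ord0 i) = 0.
  by rewrite addr0.
case: Hc => [->|[Wn ->]]; first by rewrite subrr mulr0 mul0r.
rewrite sumrB -mulr_suml !mxE summxE.
have e : \sum_(p <- l) (p.2 *: p.1.2) ord0 i = \sum_(p <- l) p.2 * p.1.2 ord0 i.
  by apply: eq_bigr => p _; rewrite mxE.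
by rewrite e mulrA mulfV // mul1r subrr mulr0.
Qed.

Lemma half (R : realType) (d : nat) (X : set 'rV[R]_d) (Q : 'rV[R]_d -> R) (eps : R)
  (L : seq (('rV[R]_d * 'rV[R]_d) * R)) :
  convex_set X -> convex_on X Q -> lipschitz1_on X Q ->
  (forall p, p \in L -> X p.1.1 /\ X p.1.2 /\ 0 <= p.2) ->
  \sum_(p <- L) p.2 = 1 ->
  (forall phi : 'rV[R]_d -> 'rV[R]_d, (forall x, X x -> X (phi x)) ->
     \sum_(p <- L) p.2 * (- sqnorm (phi p.1.1 - p.1.2) - - sqnorm (p.1.1 - p.1.2)) <= eps) ->
  \sum_(p <- L) p.2 * (Q p.1.1 - Q p.1.2) <= Num.sqrt eps.
Proof.
move=> cX cQ lQ HL L1 Heq.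
pose W k := \sum_(p <- L | p.1.1 == k) p.2.
pose S k := \sum_(p <- L | p.1.1 == k) p.2 *: p.1.2.
pose g k := if 0 < W k then (W k)^-1 *: S k else k.
have Hf : forall k p, p \in [seq p <- L | p.1.1 == k] -> X p.1.2 /\ 0 <= p.2.
  by move=> k p; rewrite mem_filter => /andP [_ /HL] [_ []].
have HJ : forall k, 0 < W k -> X (g k) /\ W k * Q (g k) <= \sum_(p <- L | p.1.1 == k) p.2 * Q p.1.2.
  move=> k Wk; have := @jensen _ _ X Q _ cX cQ (Hf k).
  by rewrite !big_filter /g Wk => /(_ isT).
have W0 : forall k, 0 <= W k.
  by move=> k; rewrite /W big_seq_cond; apply: sumr_ge0 => p /andP [/HL [_ []]].
have gX : forall k, X k -> X (g k).
  by move=> k Xk; case: (ltrP 0 (W k)) => [/HJ []//|Wk]; rewrite /g ltNge Wk.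
have ksplit : forall k (F : _ -> R), \sum_(p <- L | p.1.1 == k) p.2 * (Q p.1.1 - F p) =
    W k * Q k - \sum_(p <- L | p.1.1 == k) p.2 * F p.
  move=> k F; rewrite /W mulr_suml -sumrB; apply: eq_bigr => p /eqP ->; ring.
have SA : \sum_(p <- L) p.2 * (Q p.1.1 - Q p.1.2) <= \sum_(p <- L) p.2 * (Q p.1.1 - Q (g p.1.1)).
  rewrite (group_sum _ _ _ (fun p => p.1.1)) [Y in _ <= Y](group_sum _ _ _ (fun p => p.1.1)).
  apply: ler_sum => k _.
  rewrite ksplit.
  have -> : \sum_(p <- L | p.1.1 == k) p.2 * (Q p.1.1 - Q (g p.1.1)) =
      W k * Q k - W k * Q (g k).
    by rewrite ksplit; congr (_ - _); rewrite /W mulr_suml; apply: eq_bigr => p /eqP ->.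
  case: (ltrP 0 (W k)) => [/HJ [_ h]|Wk]; first by lra.
  have Wk0 : W k = 0 by apply/eqP; rewrite eq_le Wk W0.
  have z := @w0 R _ [seq p <- L | p.1.1 == k] (fun p pl => (Hf k p pl).2).
  rewrite big_filter in z; have z' := z Wk0.
  rewrite Wk0 -big_filter big1_seq ?mul0r ?subrr //.
  by move=> p /andP [_ /z' ->]; rewrite mul0r.
apply: (le_trans SA).
pose n (p : ('rV[R]_d * 'rV[R]_d) * R) := norm2 (p.1.1 - g p.1.1).
have SB : \sum_(p <- L) p.2 * (Q p.1.1 - Q (g p.1.1)) <= \sum_(p <- L) p.2 * n p.
  rewrite big_seq [leRHS]big_seq; apply: ler_sum => p pL; have [Xa [Xb wp]] := HL p pL.
  apply: ler_wpM2l => //; exact: le_trans (ler_norm _) (lQ _ _ Xa (gX _ Xa)).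
apply: (le_trans SB).
have m0 : 0 <= \sum_(p <- L) p.2 * n p.
  by rewrite big_seq; apply: sumr_ge0 => p pL; rewrite mulr_ge0 ?sqrtr_ge0 //; case: (HL p pL) => _ [].
have SC := @var_le R _ L (fun p => p.2) n (fun p pL => (HL p pL).2.2) L1.
have sq0 : forall v : 'rV[R]_d, 0 <= sqnorm v.
  by move=> v; apply: sumr_ge0 => i _; apply: sqr_ge0.
have SD : \sum_(p <- L) p.2 * n p ^+ 2 =
    \sum_(p <- L) p.2 * (sqnorm (p.1.1 - p.1.2) - sqnorm (g p.1.1 - p.1.2)).
  under eq_bigr => p _ do rewrite /n /norm2 sqr_sqrtr ?sq0 //.
  rewrite (group_sum _ _ _ (fun p => p.1.1)) [RHS](group_sum _ _ _ (fun p => p.1.1)).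
  apply: eq_bigr => k _.
  transitivity (\sum_(p <- L | p.1.1 == k) p.2 * sqnorm (k - g k)).
    by apply: eq_bigr => p /eqP ->.
  symmetry.
  transitivity (\sum_(p <- L | p.1.1 == k) p.2 * (sqnorm (k - p.1.2) - sqnorm (g k - p.1.2))).
    by apply: eq_bigr => p /eqP ->.
  rewrite -[LHS]big_filter -[RHS]big_filter; apply: key_ident.
  case: (ltrP 0 (W k)) => Wk.
    right; rewrite !big_filter; split; first by rewrite (gt_eqF Wk).
    by rewrite /g Wk /W /S.
  by left; rewrite /g ltNge Wk /=.
have SE : \sum_(p <- L) p.2 * (sqnorm (p.1.1 - p.1.2) - sqnorm (g p.1.1 - p.1.2)) <= eps.
  have := Heq g gX; congr (_ <= _); apply: eq_bigr => p _; rewrite opprK addrC //.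
rewrite -(ger0_norm m0) -sqrtr_sqr; apply: ler_wsqrtr.
by apply: (le_trans SC); rewrite SD.
Qed.

Lemma mem_In (T : eqType) (s : seq T) p : p \in s -> List.In p s.
Proof. elim: s => //= q s IH; rewrite in_cons => /orP [/eqP->|/IH H]; [by left|by right]. Qed.

Theorem lemma3p2 (R : realType) (d : nat) (X : set 'rV[R]_d)
  (f : 'rV[R]_d -> 'rV[R]_d) (eps : R) (mu : seq (('rV[R]_d * 'rV[R]_d) * R)) :
  convex_set X -> compact X ->
  (forall x, X x -> X (f x)) ->
  approx_nfce X X (fun x y => - sqnorm (x - y)) (fun x y => - sqnorm (y - f x)) eps mu ->
  forall Q : 'rV[R]_d -> R, convex_on X Q -> lipschitz1_on X Q ->
  expect mu (fun xy => Q xy.1 - Q (f xy.1)) <= 2 * Num.sqrt eps.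
Proof.
move=> cX _ fX [[Hw H1] [Hs [H1p H2p]]] Q cQ lQ.
have HL : forall p, p \in mu -> X p.1.1 /\ X p.1.2 /\ 0 <= p.2.
  by move=> p /mem_In pm; have [? ?] := Hs p pm; split => //; split => //; apply: Hw.
have A := @half R d X Q eps mu cX cQ lQ HL H1 H1p.
pose L2 := [seq ((p.1.2, f p.1.1), p.2) | p <- mu].
have HL2 : forall p, p \in L2 -> X p.1.1 /\ X p.1.2 /\ 0 <= p.2.
  move=> p /mapP [q qm ->] /=; have [? [? ?]] := HL q qm.
  by split => //; split => //; apply: fX.
have H12 : \sum_(p <- L2) p.2 = 1 by rewrite big_map.
have H22 : forall phi : 'rV[R]_d -> 'rV[R]_d, (forall x, X x -> X (phi x)) ->
     \sum_(p <- L2) p.2 * (- sqnorm (phi p.1.1 - p.1.2) - - sqnorm (p.1.1 - p.1.2)) <= eps.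
  by move=> phi hphi; rewrite big_map; apply: H2p.
have B := @half R d X Q eps L2 cX cQ lQ HL2 H12 H22.
rewrite big_map /= in B.
have -> : expect mu (fun xy => Q xy.1 - Q (f xy.1)) =
  \sum_(p <- mu) p.2 * (Q p.1.1 - Q p.1.2) + \sum_(p <- mu) p.2 * (Q p.1.2 - Q (f p.1.1)).
  rewrite /expect -big_split /=; apply: eq_bigr => p _; ring.
lra.
Qed.
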